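(* Let $C\subset[0,1]^2$ be a Cantor set generated by a sequence of positive integers $(n_k)_{k\ge1}$ with $n_{2k-1}\ge n_{2k}$ for all $k$ (construction described in the context). Then $\pi_0(C)=[0,1]$, where $\pi_0(x,y)=x$.
   Context: Let $(n_k)_{k\ge1}$ be positive integers with $n_{2k-1}\ge n_{2k}$ for all $k\ge1$, and set $N_j=n_1+\dots+n_j$, $N_0=0$. All squares below are closed grid squares, i.e. squares $[i4^{-N},(i+1)4^{-N}]\times[j4^{-N},(j+1)4^{-N}]$; a column of width $4^{-N}$ is a strip $[j4^{-N},(j+1)4^{-N}]\times[0,1]$. Let $C_0=\{[0,1]^2\}$. For $k\ge0$, given the collection $C_{2k}$ of squares of side $4^{-N_{2k}}$: (i) each $Q\in C_{2k}$ is subdivided into $4^{2n_{2k+1}}$ squares of side $4^{-N_{2k+1}}$ and $2^{3n_{2k+1}}$ of them are chosen so that each column of width $4^{-N_{2k+1}}$ meeting the interior of $Q$ contains exactly $2^{n_{2k+1}}$ chosen squares inside $Q$; $C_{2k+1}$ is the collection of all chosen squares. (ii) Each square of $C_{2k+1}$ is subdivided into $4^{2n_{2k+2}}$ squares of side $4^{-N_{2k+2}}$ and $2^{n_{2k+2}}$ of them are chosen, so that for each $Q\in C_{2k}$: every column of width $4^{-N_{2k+2}}$ meeting the interior of $Q$ contains at least one chosen square inside $Q$; and among the chosen squares inside $Q$ there are two whose orthogonal projections onto the line $y=x$ coincide, and two whose orthogonal projections onto the line $y=-x$ coincide. $C_{2k+2}$ is the collection of all chosen squares. Identifying $C_m$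 with the union of its squares, the Cantor set generated is $C=\bigcap_{m\ge1}C_m$. *)

(* Defs.v *)
From Stdlib Require Import Reals List Arith Bool.
Import ListNotations.

(* The sequence (n_k)_{k>=1} is a function n : nat -> nat; n 0 is unused.
   N_j = n_1 + ... + n_j, N_0 = 0. *)
Fixpoint NN (n : nat -> nat) (j : nat) : nat :=
  match j with
  | 0 => 0
  | S j' => NN n j' + n (S j')
  end.

(* A grid square of side 4^{-N} is indexed by (i, j) : it is
   [i 4^{-N}, (i+1) 4^{-N}] x [j 4^{-N}, (j+1) 4^{-N}].
   The collection C_m (of squares of side 4^{-N_m}) is encoded by its
   characteristic function  C m : nat -> nat -> bool  (C m i j = true iff the
   square (i,j) of level N_m belongs to C_m). *)
Definition Collections := nat -> nat -> nat -> bool.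

(* A square (i',j') of level N+d lies inside the square (i,j) of level N
   iff i' / 4^d = i and j' / 4^d = j.  Likewise a column c of width
   4^{-(N+d)} meets the interior of the square (i,j) of level N iff
   c / 4^d = i. *)
Definition inside (d i' j' i j : nat) : Prop := i' / 4 ^ d = i /\ j' / 4 ^ d = j.

Definition col_count (C : Collections) (m c j d : nat) : nat :=
  length (filter (fun t => C m c (j * 4 ^ d + t)) (seq 0 (4 ^ d))).

Definition sq_count (C : Collections) (m i j d : nat) : nat :=
  fold_right plus 0
    (map (fun s => col_count C m (i * 4 ^ d + s) j d) (seq 0 (4 ^ d))).

Definition valid_construction (n : nat -> nat) (C : Collections) : Prop :=
  (forall i j, C 0 i j = andb (Nat.eqb i 0) (Nat.eqb j 0)) /\
  (forall k, let a := n (2 * k + 1) in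
     (forall i j, C (2 * k + 1) i j = true ->
        C (2 * k) (i / 4 ^ a) (j / 4 ^ a) = true) /\
     (forall i j, C (2 * k) i j = true ->
        sq_count C (2 * k + 1) i j a = 2 ^ (3 * a) /\
        (forall c, c / 4 ^ a = i -> col_count C (2 * k + 1) c j a = 2 ^ a))) /\
  (forall k, let b := n (2 * k + 2) in let d := n (2 * k + 1) + b in
     (forall i j, C (2 * k + 2) i j = true ->
        C (2 * k + 1) (i / 4 ^ b) (j / 4 ^ b) = true) /\
     (forall i j, C (2 * k + 1) i j = true ->
        sq_count C (2 * k + 2) i j b = 2 ^ b) /\
     (forall i j, C (2 * k) i j = true ->
        (forall c, c / 4 ^ d = i ->
           exists r, r / 4 ^ d = j /\ C (2 * k + 2) c r = true) /\
        (* two distinct chosen squares inside Q with the same projection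
           onto the line y = x  (i.e. equal i + j) *)
        (exists a1 b1 a2 b2, (a1, b1) <> (a2, b2) /\
           inside d a1 b1 i j /\ inside d a2 b2 i j /\
           C (2 * k + 2) a1 b1 = true /\ C (2 * k + 2) a2 b2 = true /\
           a1 + b1 = a2 + b2) /\
        (* two distinct chosen squares inside Q with the same projection
           onto the line y = -x  (i.e. equal i - j) *)
        (exists a1 b1 a2 b2, (a1, b1) <> (a2, b2) /\
           inside d a1 b1 i j /\ inside d a2 b2 i j /\
           C (2 * k + 2) a1 b1 = true /\ C (2 * k + 2) a2 b2 = true /\
           a1 + b2 = a2 + b1))).

Definition closed_square (N i j : nat) (p : R * R) : Prop :=
  (INR i / 4 ^ N <= fst p <= (INR i + 1) / 4 ^ N)%R /\
  (INR j / 4 ^ N <= snd p <= (INR j + 1) / 4 ^ N)%R.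

Definition cantor_set (n : nat -> nat) (C : Collections) (p : R * R) : Prop :=
  forall m, 1 <= m -> exists i j, C m i j = true /\ closed_square (NN n m) i j p.

(* Main.v *)
Require Import Defs.
From Stdlib Require Import Reals List Arith Lra Lia ClassicalEpsilon Classical.
Open Scope R_scope.

Lemma pow4_pos (k : nat) : 0 < 4 ^ k.
Proof. apply pow_lt; lra. Qed.

Lemma nest (N d a : nat) (z : R) :
  INR a / 4 ^ (N + d) <= z <= (INR a + 1) / 4 ^ (N + d) ->
  INR (a / 4 ^ d) / 4 ^ N <= z <= (INR (a / 4 ^ d) + 1) / 4 ^ N.
Proof.
  intros [h1 h2].
  set (q := (a / 4 ^ d)%nat).
  assert (hd : (4 ^ d <> 0)%nat) by (apply Nat.pow_nonzero; lia).
  assert (e1 : (q * 4 ^ d <= a)%nat).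
  { unfold q. rewrite Nat.mul_comm. apply Nat.Div0.mul_div_le. }
  assert (e2 : (a + 1 <= (q + 1) * 4 ^ d)%nat).
  { unfold q. pose proof (Nat.mod_upper_bound a (4^d) hd).
    pose proof (Nat.div_mod a (4^d) hd). nia. }
  apply le_INR in e1. apply le_INR in e2.
  rewrite mult_INR, pow_INR in e1. rewrite plus_INR, mult_INR, plus_INR, pow_INR in e2.
  simpl INR in e1, e2. replace (1+1+1+1) with 4 in e1, e2 by ring.
  rewrite pow_add in h1, h2.
  pose proof (pow4_pos N). pose proof (pow4_pos d).
  split.
  - apply Rle_trans with (2 := h1).
    apply Rmult_le_reg_r with (4 ^ N * 4 ^ d). nra.
    field_simplify; try lra; try nra.
  - apply Rle_trans with (1 := h2).
    apply Rmult_le_reg_r with (4 ^ N * 4 ^ d). nra.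
    field_simplify; try lra; try nra.
Qed.

Lemma subdiv (M : nat) (z : R) : (0 < M)%nat -> 0 <= z <= INR M ->
  exists t, (t < M)%nat /\ INR t <= z <= INR t + 1.
Proof.
  induction M as [|M IH]; intros hM hz; [lia|].
  destruct M as [|M].
  - exists 0%nat. simpl in *. split; [lia|lra].
  - destruct (Rle_dec z (INR (S M))) as [h|h].
    + destruct (IH ltac:(lia) ltac:(lra)) as [t [ht1 ht2]]. exists t; split; [lia|lra].
    + exists (S M). split; [lia|]. rewrite (S_INR (S M)) in hz. lra.
Qed.

Lemma refine (N d c : nat) (x : R) :
  INR c / 4 ^ N <= x <= (INR c + 1) / 4 ^ N ->
  exists c', (c' / 4 ^ d = c)%nat /\
    INR c' / 4 ^ (N + d) <= x <= (INR c' + 1) / 4 ^ (N + d).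
Proof.
  intros [h1 h2].
  pose proof (pow4_pos N). pose proof (pow4_pos d).
  assert (hd : (4 ^ d <> 0)%nat) by (apply Nat.pow_nonzero; lia).
  assert (hM : INR (4 ^ d) = 4 ^ d).
  { rewrite pow_INR. simpl INR. f_equal. ring. }
  assert (hz : 0 <= x * 4 ^ N * 4 ^ d - INR c * 4 ^ d <= INR (4 ^ d)).
  { rewrite hM.
    assert (INR c <= x * 4 ^ N).
    { apply Rmult_le_reg_r with (/ 4 ^ N). apply Rinv_0_lt_compat; lra.
      rewrite Rmult_assoc, Rinv_r; lra. }
    assert (x * 4 ^ N <= INR c + 1).
    { apply Rmult_le_reg_r with (/ 4 ^ N). apply Rinv_0_lt_compat; lra.
      rewrite Rmult_assoc, Rinv_r; lra. }
    nra. }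
  destruct (subdiv (4 ^ d) _ ltac:(lia) hz) as [t [ht1 [ht2 ht3]]].
  exists (t + c * 4 ^ d)%nat. split.
  - rewrite Nat.div_add by exact hd. rewrite Nat.div_small by exact ht1. lia.
  - rewrite plus_INR, mult_INR, hM, pow_add. split.
    + apply Rmult_le_reg_r with (4 ^ N * 4 ^ d). nra.
      field_simplify; try lra.
    + apply Rmult_le_reg_r with (4 ^ N * 4 ^ d). nra.
      field_simplify; try lra.
Qed.
Close Scope R_scope.
Lemma NN2 (n : nat -> nat) k : NN n (2 * k + 2) = (NN n (2 * k) + (n (2 * k + 1) + n (2 * k + 2)))%nat.
Proof.
  replace (2 * k + 2)%nat with (S (S (2 * k))) by lia.
  replace (2 * k + 1)%nat with (S (2 * k)) by lia. simpl. lia.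
Qed.

Lemma NN1 (n : nat -> nat) k : NN n (2 * k + 2) = (NN n (2 * k + 1) + n (2 * k + 2))%nat.
Proof.
  replace (2 * k + 2)%nat with (S (2 * k + 1)) by lia. simpl. reflexivity.
Qed.

Theorem proposition3p2 (n : nat -> nat) (C : Collections)
  (hpos : forall k, 0 < n (S k))
  (hmono : forall k, n (2 * k + 2) <= n (2 * k + 1))
  (hC : valid_construction n C) :
  forall x : R, (0 <= x <= 1)%R <-> exists y : R, cantor_set n C (x, y).
Proof.
  Open Scope R_scope.
  destruct hC as [h0 [hi hii]].
  intros x; split.
  2:{ intros [y hy]. destruct (hy 1%nat ltac:(lia)) as [i [j [hij [hx _]]]].
      destruct (hi 0%nat) as [hp _]. cbv zeta in hp.
      specialize (hp _ _ hij). rewrite h0 in hp.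
      apply andb_prop in hp. destruct hp as [hp _]. apply Nat.eqb_eq in hp.
      change (NN n 1) with (0 + n (2 * 0 + 1))%nat in hx.
      apply nest in hx. rewrite hp in hx. simpl in hx. lra. }
  intros hx.
  set (Good := fun k (p : nat * nat) => C (2 * k)%nat (fst p) (snd p) = true /\
     INR (fst p) / 4 ^ (NN n (2 * k)) <= x <= (INR (fst p) + 1) / 4 ^ (NN n (2 * k))).
  set (dd := fun k => (n (2 * k + 1) + n (2 * k + 2))%nat).
  assert (Hstep : forall k p, Good k p -> exists p', Good (S k) p' /\
     (fst p' / 4 ^ dd k = fst p)%nat /\ (snd p' / 4 ^ dd k = snd p)%nat).
  { intros k [c r] [hg1 hg2]. simpl in hg1, hg2.
    destruct (refine (NN n (2 * k)) (dd k) c x hg2) as [c' [hc1 hc2]].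
    destruct (hii k) as [_ [_ h3]]. cbv zeta in h3.
    destruct (h3 c r hg1) as [h4 _].
    destruct (h4 c' hc1) as [r' [hr1 hr2]].
    exists (c', r'). unfold Good. cbn [fst snd].
    replace (2 * S k)%nat with (2 * k + 2)%nat by lia.
    rewrite NN2. unfold dd in *. auto. }
  assert (F : forall k p, {p' | Good k p -> Good (S k) p' /\
     (fst p' / 4 ^ dd k = fst p)%nat /\ (snd p' / 4 ^ dd k = snd p)%nat}).
  { intros k p. apply constructive_indefinite_description.
    destruct (classic (Good k p)) as [g|g].
    - destruct (Hstep k p g) as [p' hp']. exists p'. auto.
    - exists p. tauto. }
  pose (sq := fix f k := match k with 0%nat => (0%nat, 0%nat) | S k => proj1_sig (F k (f k)) end).
  assert (Gsq : forall k, Good k (sq k)).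
  { induction k.
    - unfold Good. simpl. rewrite h0. simpl. lra.
    - simpl. destruct (F k (sq k)) as [p' hp']. simpl. apply hp'. exact IHk. }
  assert (Nsq : forall k, (snd (sq (S k)) / 4 ^ dd k = snd (sq k))%nat).
  { intros k. simpl. destruct (F k (sq k)) as [p' hp']. simpl. apply hp'. apply Gsq. }
  set (lo := fun k => INR (snd (sq k)) / 4 ^ (NN n (2 * k))).
  set (up := fun k => (INR (snd (sq k)) + 1) / 4 ^ (NN n (2 * k))).
  assert (lu : forall k, lo k <= up k).
  { intros k. unfold lo, up. pose proof (pow4_pos (NN n (2 * k))).
    unfold Rdiv. apply Rmult_le_compat_r. left; apply Rinv_0_lt_compat; lra. lra. }
  assert (mon : forall k, lo k <= lo (S k) /\ up (S k) <= up k).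
  { intros k.
    assert (e : NN n (2 * S k) = (NN n (2 * k) + dd k)%nat).
    { replace (2 * S k)%nat with (2 * k + 2)%nat by lia. apply NN2. }
    pose proof (lu (S k)) as hl. unfold lo, up in hl |- *. rewrite e in hl |- *.
    split.
    - assert (hz : INR (snd (sq (S k))) / 4 ^ (NN n (2 * k) + dd k) <= INR (snd (sq (S k))) / 4 ^ (NN n (2 * k) + dd k) <= (INR (snd (sq (S k))) + 1) / 4 ^ (NN n (2 * k) + dd k)) by lra.
      apply nest in hz. rewrite Nsq in hz. lra.
    - assert (hz : INR (snd (sq (S k))) / 4 ^ (NN n (2 * k) + dd k) <= (INR (snd (sq (S k))) + 1) / 4 ^ (NN n (2 * k) + dd k) <= (INR (snd (sq (S k))) + 1) / 4 ^ (NN n (2 * k) + dd k)) by lra.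
      apply nest in hz. rewrite Nsq in hz. lra. }
  assert (mon2 : forall k j, (k <= j)%nat -> lo k <= lo j /\ up j <= up k).
  { intros k j hkj. induction hkj. lra. destruct (mon m). lra. }
  assert (cross : forall j k, lo j <= up k).
  { intros j k. destruct (Nat.le_ge_cases j k) as [h|h].
    - destruct (mon2 _ _ h). pose proof (lu k). lra.
    - destruct (mon2 _ _ h). pose proof (lu j). lra. }
  destruct (completeness (fun v => exists k, v = lo k)) as [y [hy1 hy2]].
  { exists (up 0%nat). intros v [k ->]. apply cross. }
  { exists (lo 0%nat). exists 0%nat. reflexivity. }
  assert (hyk : forall k, lo k <= y <= up k).
  { intros k. split.
    - apply hy1. exists k. reflexivity.
    - apply hy2. intros v [j ->]. apply cross. }
  exists y. intros m hm.
  destruct (Nat.Even_or_Odd m) as [[k ->]|[k ->]].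
  - exists (fst (sq k)), (snd (sq k)). destruct (Gsq k) as [g1 g2].
    split; [exact g1|]. split; [exact g2|]. exact (hyk k).
  - destruct (Gsq (S k)) as [g1 g2].
    replace (2 * S k)%nat with (2 * k + 2)%nat in g1, g2 by lia.
    destruct (hii k) as [hp _]. cbv zeta in hp.
    specialize (hp _ _ g1).
    eexists; eexists; split; [exact hp|].
    pose proof (hyk (S k)) as hy. unfold lo, up in hy.
    replace (2 * S k)%nat with (2 * k + 2)%nat in hy by lia.
    rewrite NN1 in g2, hy.
    split; simpl; apply nest; assumption.
Qed.
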